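(* Let $N$ be a binary orchard network with $k$ reticulations at the top, with horizontal arcs at the top $(x_1,y_1),\dots,(x_k,y_k)$, and let $t$ be an HGT-consistent labelling of $N$. Then $t(x_i)=t(y_i)$ for every $i\in\{1,\dots,k\}$.
   Context: A (directed phylogenetic) network on a finite taxa set $X$ is a directed acyclic graph without parallel arcs whose nodes are of the following types: a unique root (indegree 0, outdegree 1); tree nodes (indegree 1, outdegree at least 2); reticulations (indegree at least 2, outdegree 1); leaves (indegree 1, outdegree 0), the leaves being bijectively labelled by $X$. Non-leaf nodes are called internal. A network is binary if every tree node and every reticulation has total degree exactly 3. An arc $(u,v)$ is a reticulation arc if $v$ is a reticulation. A tree is a network without reticulations. Orchard networks: An ordered pair of leaves $(x,y)$ is a cherry if $x$ and $y$ have a common parent; it is a reticulated cherry if the parent $p_x$ of $x$ is a reticulation and $p_x$ and $y$ have a common parent. Let $p_x,p_y$ be the parents of $x,y$. Reducing $(x,y)$ in a network $N$: if $(x,y)$ is a cherry, delete $x$ and suppress $p_x$ if it now has indegree 1 and outdegree 1; if $(x,y)$ is a reticulated cherry, delete the arc $(p_y,p_x)$ and suppress any resulting node of indegree 1 and outdegree 1; otherwise do nothing. (Suppressing a node $v$ with one parent $u$ and one child $w$ means deleting $v$ and adding the arc $(u,w)$.) $N$ is orchard if some sequence of such reductions turns $N$ into a tree with exactly one leaf. HGT-consistent labelling: Let $N$ be a binary network with node set $V$. An HGT-consistent labelling of $N$ is a map $t:V\to\mathbb{R}$ such that (1) for every arc $(u,v)$, $t(u)\le t(v)$, and equality is allowed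 only if $v$ is a reticulation; (2) every internal node $u$ has a child $v$ with $t(u)<t(v)$; (3) for every reticulation $r$ with parents $u$ and $v$, exactly one of $t(u)=t(r)$ and $t(v)=t(r)$ holds. Reticulations at the top: Let $N$ be a binary orchard network and $v_\rho$ the child of the root. $N$ has $k$ reticulations at the top if it contains two directed paths $v_\rho,a_1,\dots,a_k$ and $v_\rho,b_1,\dots,b_k$ with all $a_i,b_j$ distinct, and $k$ reticulation arcs $(x_i,y_i)$, $i=1,\dots,k$, with $\{x_i,y_i\}=\{a_i,b_i\}$; moreover there is no arc between the child of $y_k$ and the child of $x_k$ other than $y_k$. The arcs $(x_i,y_i)$ are the horizontal arcs at the top (the lowest one being $(x_k,y_k)$), and $y_1,\dots,y_k$ are the reticulations at the top. *)

(* Defs.v *)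
From HB Require Import structures.
From mathcomp Require Import all_boot all_order all_algebra.
From mathcomp Require Import reals.
Set Implicit Arguments. Unset Strict Implicit. Unset Printing Implicit Defensive.
Import Order.TTheory GRing.Theory Num.Theory.

(* A (directed) graph with node type T : finType is given by a node set
   V : {set T} and an arc set A : {set (T * T)} (no parallel arcs). *)
Section Networks.
Variable T : finType.

Definition arc (A : {set T * T}) : rel T := fun u v => (u, v) \in A.
Definition parents (A : {set T * T}) (v : T) : {set T} := [set u | (u, v) \in A].
Definition children (A : {set T * T}) (v : T) : {set T} := [set w | (v, w) \in A].
Definition indeg (A : {set T * T}) (v : T) : nat := #|parents A v|.
Definition outdeg (A : {set T * T}) (v : T) : nat := #|children A v|.

(* Leaves are identified with the taxa. *)
Definition is_network (V : {set T}) (A : {set T * T}) : Prop :=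
  A \subset setX V V /\
  (forall u v, (u, v) \in A -> ~~ connect (arc A) v u) /\
  (exists! r, r \in V /\ indeg A r = 0) /\
  (forall v, v \in V -> indeg A v = 0 -> outdeg A v = 1) /\
  (forall v, v \in V -> indeg A v = 1 -> outdeg A v = 0 \/ 2 <= outdeg A v) /\
  (forall v, v \in V -> 2 <= indeg A v -> outdeg A v = 1).

Definition is_root (V : {set T}) (A : {set T * T}) (v : T) : Prop :=
  v \in V /\ indeg A v = 0.
Definition is_tree_node (V : {set T}) (A : {set T * T}) (v : T) : Prop :=
  v \in V /\ indeg A v = 1 /\ 2 <= outdeg A v.
Definition is_reticulation (V : {set T}) (A : {set T * T}) (v : T) : Prop :=
  v \in V /\ 2 <= indeg A v.
Definition is_leaf (V : {set T}) (A : {set T * T}) (v : T) : Prop :=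
  v \in V /\ indeg A v = 1 /\ outdeg A v = 0.
Definition is_internal (V : {set T}) (A : {set T * T}) (v : T) : Prop :=
  v \in V /\ 0 < outdeg A v.

Definition is_binary_network (V : {set T}) (A : {set T * T}) : Prop :=
  is_network V A /\
  (forall v, is_tree_node V A v -> indeg A v + outdeg A v = 3) /\
  (forall v, is_reticulation V A v -> indeg A v + outdeg A v = 3).

Definition is_one_leaf_tree (V : {set T}) (A : {set T * T}) : Prop :=
  is_network V A /\ (forall v, ~ is_reticulation V A v) /\
  #|[set v in V | (indeg A v == 1) && (outdeg A v == 0)]| = 1.

Definition suppress (G : {set T} * {set T * T}) (v : T) : {set T} * {set T * T} :=
  let V := G.1 in let A := G.2 in
  if (indeg A v == 1) && (outdeg A v == 1) then
    match [pick u in parents A v], [pick w in children A v] with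
    | Some u, Some w =>
        (V :\ v, [set a in A | (a.1 != v) && (a.2 != v)] :|: [set (u, w)])
    | _, _ => G
    end
  else G.

Inductive reduce_step : {set T} * {set T * T} -> {set T} * {set T * T} -> Prop :=
| reduce_cherry (V : {set T}) (A : {set T * T}) (x y px : T) :
    is_network V A -> x != y -> is_leaf V A x -> is_leaf V A y ->
    (px, x) \in A -> (px, y) \in A ->
    reduce_step (V, A) (suppress (V :\ x, A :\ (px, x)) px)
| reduce_ret_cherry (V : {set T}) (A : {set T * T}) (x y px py : T) :
    is_network V A -> x != y -> is_leaf V A x -> is_leaf V A y ->
    (px, x) \in A -> (py, y) \in A -> is_reticulation V A px ->
    (py, px) \in A ->
    reduce_step (V, A) (suppress (suppress (V, A :\ (py, px)) py) px).

Inductive reduces : {set T} * {set T * T} -> {set T} * {set T * T} -> Prop :=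
| reduces_refl G : reduces G G
| reduces_step G1 G2 G3 : reduce_step G1 G2 -> reduces G2 G3 -> reduces G1 G3.

Definition is_orchard (V : {set T}) (A : {set T * T}) : Prop :=
  exists G', reduces (V, A) G' /\ is_one_leaf_tree G'.1 G'.2.

Definition HGT_consistent (R : realType) (V : {set T}) (A : {set T * T})
    (t : T -> R) : Prop :=
  [/\ (forall u v, (u, v) \in A -> (t u <= t v)%R /\ (t u = t v -> is_reticulation V A v)),
      (forall u, is_internal V A u -> exists v, (u, v) \in A /\ (t u < t v)%R)
    & (forall r u v, is_reticulation V A r -> u != v -> (u, r) \in A -> (v, r) \in A ->
         (t u == t r) != (t v == t r))].

(* N has k reticulations at the top, witnessed by paths a_1..a_k, b_1..b_k
   (indices 1..k) starting at the child vrho of the root, and horizontal arcs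
   (x_i, y_i), i = 1..k.  Requires k >= 1. *)
Definition ret_at_top (V : {set T}) (A : {set T * T}) (k : nat)
    (a b x y : nat -> T) : Prop :=
  0 < k /\
  exists rho vrho : T,
    [/\ is_root V A rho /\ (rho, vrho) \in A,
        (vrho, a 1%N) \in A /\ (vrho, b 1%N) \in A,
        (forall i, (1 <= i < k)%N -> (a i, a i.+1) \in A /\ (b i, b i.+1) \in A),
        (forall i j, (1 <= i <= k)%N -> (1 <= j <= k)%N ->
           a i != b j /\ (i != j -> a i != a j /\ b i != b j))
      & ((forall i, (1 <= i <= k)%N ->
           [/\ (x i = a i /\ y i = b i) \/ (x i = b i /\ y i = a i),
               (x i, y i) \in A & is_reticulation V A (y i)]) /\
        (forall c d, (y k, c) \in A -> (x k, d) \in A -> d != y k ->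
           ~ ((c, d) \in A \/ (d, c) \in A)))].

End Networks.

(* Main.v *)
Require Import Defs.
From HB Require Import structures.
From mathcomp Require Import all_boot all_order all_algebra.
From mathcomp Require Import reals.
Import Order.TTheory GRing.Theory Num.Theory.
Local Open Scope ring_scope.

Theorem mainTheorem9 (T : finType) (V : {set T}) (A : {set T * T})
    (R : realType) (t : T -> R) (k : nat) (a b x y : nat -> T) :
  is_binary_network V A -> is_orchard V A ->
  ret_at_top V A k a b x y ->
  HGT_consistent V A t ->
  forall i : nat, (1 <= i <= k)%N -> t (x i) = t (y i).
Proof.
move=> [[HAV [Hacy [_ [_ [_ Hret]]]]] _] _ [Hk [rho [vrho [[Hroot Hrv] [Ha1 Hb1] Hpath Hdist [Hxy _]]]]].
move=> [H1 H2 H3].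
have key : forall xi yi p q, (xi, yi) \in A -> is_reticulation V A yi ->
   (p, yi) \in A -> (q, xi) \in A -> t p = t q -> p != xi -> t xi = t yi.
  move=> xi yi p q Hxyi Hryi Hp Hq Hpq Hpx.
  have := H3 yi xi p Hryi; rewrite eq_sym => /(_ Hpx Hxyi Hp).
  case: (eqVneq (t xi) (t yi)) => // Hne /= /negPn /eqP Hpy.
  have [Hqx _] := H1 q xi Hq.
  have [Hxy' _] := H1 xi yi Hxyi.
  have Heq : t q = t xi.
    apply/eqP; rewrite eq_le Hqx /=; by rewrite -Hpq Hpy.
  have [_ Hrx] := H1 q xi Hq.
  have Hxv : xi \in V.
    by have := subsetP HAV _ Hxyi; rewrite inE /= => /andP[].
  have [_ Hind] := Hrx Heq.
  have Hout := Hret xi Hxv Hind.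
  have [v [Hv Hlt]] : exists v, (xi, v) \in A /\ t xi < t v.
    apply: H2; split => //; by rewrite Hout.
  move: Hout; rewrite /outdeg => /eqP /cards1P [z Hz].
  have : yi \in children A xi by rewrite inE.
  have : v \in children A xi by rewrite inE.
  rewrite Hz !inE => /eqP Ev /eqP Ey.
  by move: Hlt; rewrite Ev -Ey -Hpy Hpq Heq ltxx.
move=> i; elim: i => [|j IH] //.
case: j IH => [|j] IH Hi.
  have [Hc Hxa Hry] := Hxy 1%N Hi.
  have Hne : vrho != x 1%N.
    apply/negP => /eqP E.
    have Hvx : (vrho, x 1%N) \in A by case: Hc => [[-> _]|[-> _]].
    by have := Hacy _ _ Hvx; rewrite -E connect0.
  case: Hc => [[Ex Ey]|[Ex Ey]].
    apply: (key _ _ vrho vrho) => //; by rewrite ?Ex ?Ey.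
  apply: (key _ _ vrho vrho) => //; by rewrite ?Ex ?Ey.
have Hj : (1 <= j.+1 <= k)%N by move: Hi => /andP[_ H]; apply/andP; split => //; apply: ltnW.
have IHj := IH Hj.
have [Hc Hxa Hry] := Hxy _ Hi.
have [Hc' _ _] := Hxy _ Hj.
have [Pa Pb] := Hpath j.+1 ltac:(by move: Hi => /andP[_ H]; apply/andP).
have [Dab Dn] := Hdist j.+1 j.+2 Hj Hi.
have [Dab' _] := Hdist j.+2 j.+1 Hi Hj.
have [Daa Dbb] := Dn (ltac:(by rewrite eqn_leq ltnn andbF)).
have Etab : t (a j.+1) = t (b j.+1).
  by case: Hc' IHj => [[-> ->]|[-> ->]].
case: Hc => [[Ex Ey]|[Ex Ey]].
- apply: (key _ _ (b j.+1) (a j.+1)) => //; rewrite ?Ex ?Ey //; try by rewrite eq_sym.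
- apply: (key _ _ (a j.+1) (b j.+1)) => //; rewrite ?Ex ?Ey //; try by rewrite eq_sym.
Qed.
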